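(* Let $m,n$ be integers with $mn\neq0$ and let $K=J(2m,2n)$, with knot group $\pi_1(K)=\langle a,b\mid w^na=bw^n\rangle$, where $a,b$ are meridians and $w=(ba^{-1})^m(b^{-1}a)^m$. Let $s\neq0$ and $y\neq 2$ be complex numbers such that $\rho(a)=\begin{bmatrix}s&1\\0&s^{-1}\end{bmatrix}$, $\rho(b)=\begin{bmatrix}s&0\\2-y&s^{-1}\end{bmatrix}$ defines a representation $\rho:\pi_1(K)\to SL_2(\mathbb C)$ (equivalently $s,y$ satisfy the Riley equation $\phi_K(s,y)=0$). Let $\lambda=\overleftarrow{w}^nw^n$ be the canonical longitude corresponding to the meridian $a$, where $\overleftarrow{w}$ is the word $w$ written in reverse order. Then $$\operatorname{tr}\rho(\lambda)=2-\frac{(s+s^{-1})^2(y-2)^2S_{m-1}^2(y)}{2-s^2-s^{-2}+(y-s^2-s^{-2})(y-2)S_{m-1}^2(y)}.$$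
   Context: $S_k(v)$ denotes the Chebyshev polynomials of the second kind, defined for all integers $k$ by $S_0(v)=1$, $S_1(v)=v$, $S_k(v)=vS_{k-1}(v)-S_{k-2}(v)$. Explicitly, the Riley polynomial is $\phi_K(s,y)=S_n(z)-\big\{1+(y-s^2-s^{-2})S_{m-1}(y)(S_m(y)-S_{m-1}(y))\big\}S_{n-1}(z)$ with $z=2+(y-2)(y-s^2-s^{-2})S_{m-1}^2(y)=\operatorname{tr}\rho(w)$. *)

(* Defs.v *)
From HB Require Import structures.
From mathcomp Require Import all_boot all_order all_algebra.
From mathcomp Require Import complex reals.
Set Implicit Arguments. Unset Strict Implicit. Unset Printing Implicit Defensive.
Import Order.TTheory GRing.Theory Num.Theory.
Local Open Scope ring_scope.

Fixpoint chebS_pair {F : pzRingType} (v : F) (k : nat) : F * F :=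
  (* returns (S_k(v), S_{k+1}(v)) *)
  match k with
  | 0%N => (1, v)
  | k'.+1 => let p := chebS_pair v k' in (p.2, v * p.2 - p.1)
  end.
Definition chebS_nat {F : pzRingType} (v : F) (k : nat) : F := (chebS_pair v k).1.

(* Extension to all integers k, compatible with the recurrence
   S_k = v S_{k-1} - S_{k-2}: S_{-1} = 0 and S_{-k} = - S_{k-2}. *)
Definition chebS {F : pzRingType} (k : int) (v : F) : F :=
  match k with
  | Posz k' => chebS_nat v k'
  | Negz 0 => 0
  | Negz (k'.+1) => - chebS_nat v k'
  end.

Definition mx2 {F : pzRingType} (a b c d : F) : 'M[F]_2 :=
  \matrix_(i < 2, j < 2)
    if i == 0 :> 'I_2 then (if j == 0 :> 'I_2 then a else b)
    else (if j == 0 :> 'I_2 then c else d).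

Section RepJ.
Variables (R : realType).
Local Notation C := (R[i]).
Variables (m n : int) (s y : C).
Definition rhoA : 'M[C]_2 := mx2 s 1 0 s^-1.
Definition rhoB : 'M[C]_2 := mx2 s 0 (2 - y) s^-1.
Definition rhoW : 'M[C]_2 :=
  (rhoB * rhoA^-1) ^ m * (rhoB^-1 * rhoA) ^ m.
Definition rhoWrev : 'M[C]_2 :=
  (rhoA * rhoB^-1) ^ m * (rhoA^-1 * rhoB) ^ m.
Definition rhoLambda : 'M[C]_2 := rhoWrev ^ n * rhoW ^ n.
End RepJ.

(* Main.v *)
Require Import Defs.
From HB Require Import structures.
From mathcomp Require Import all_boot all_order all_algebra.
From mathcomp Require Import complex reals.
From mathcomp Require Import zify ring.
Import Order.TTheory GRing.Theory Num.Theory.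
Local Open Scope ring_scope.


Section Gen.
Variable F : fieldType.
Implicit Types M N : 'M[F]_2.

Definition i0 : 'I_2 := ord0.
Definition i1 : 'I_2 := ord_max.

Lemma ord2 (i : 'I_2) : i = i0 \/ i = i1.
Proof. case: i => [[|[|n]] Hi]; [left|right|by []]; exact: val_inj. Qed.

Lemma mx2P M N : M i0 i0 = N i0 i0 -> M i0 i1 = N i0 i1 ->
  M i1 i0 = N i1 i0 -> M i1 i1 = N i1 i1 -> M = N.
Proof.
move=> h00 h01 h10 h11; apply/matrixP => i j.
by case: (ord2 i) => ->; case: (ord2 j) => ->.
Qed.

Lemma mulE M N i j : (M * N) i j = M i i0 * N i0 j + M i i1 * N i1 j.
Proof.
rewrite -[M * N]/(M *m N) mxE big_ord_recr big_ord1 /=.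
by have -> : widen_ord (leqnSn 1) ord0 = i0 by apply: val_inj.
Qed.

Lemma mx2E a b c d : let M := @mx2 F a b c d in
  [/\ M i0 i0 = a, M i0 i1 = b, M i1 i0 = c & M i1 i1 = d].
Proof. by rewrite /mx2 !mxE. Qed.

Definition mdet M := M i0 i0 * M i1 i1 - M i0 i1 * M i1 i0.
Definition mtr M := M i0 i0 + M i1 i1.

Lemma one2 : [/\ (1 : 'M[F]_2) i0 i0 = 1, (1 : 'M[F]_2) i0 i1 = 0,
  (1 : 'M[F]_2) i1 i0 = 0 & (1 : 'M[F]_2) i1 i1 = 1].
Proof. by rewrite -[1]/(1%:M) !mxE. Qed.

Lemma n01 : (i0 == i1) = false. Proof. by []. Qed.
Lemma n10 : (i1 == i0) = false. Proof. by []. Qed.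

Lemma cof (x y k r : F) : r = 0 -> x - y = k * r -> x = y.
Proof. by move=> -> ; rewrite mulr0 => /eqP; rewrite subr_eq0 => /eqP. Qed.

Lemma CH M : mdet M = 1 -> M * M = mtr M *: M - 1.
Proof.
move=> H; have [o00 o01 o10 o11] := one2.
apply: mx2P; rewrite !mulE !mxE ?eqxx ?n01 ?n10 /= /mtr.
- by apply: (@cof _ _ (-1) (mdet M - 1)); [rewrite H subrr | rewrite /mdet; ring].
- by ring.
- by ring.
- by apply: (@cof _ _ (-1) (mdet M - 1)); [rewrite H subrr | rewrite /mdet; ring].
Qed.

Definition Sp (t : F) j := if j is j'.+1 then chebS_nat t j' else 0.

Lemma chebS_rec (t : F) j : chebS_nat t j.+1 = t * chebS_nat t j - Sp t j.
Proof. case: j => [|j]; last by []. by rewrite /chebS_nat /= mulr1 subr0. Qed.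

Lemma pow_nat M t : M * M = t *: M - 1 ->
  forall j, M ^+ j.+1 = chebS_nat t j *: M - Sp t j *: 1.
Proof.
move=> CHM; elim=> [|j IH].
  by rewrite expr1 /= scale0r subr0 /chebS_nat /= scale1r.
rewrite exprSr IH mulrBl -!scalerAl mul1r CHM chebS_rec /=.
by apply: mx2P; rewrite !mxE ?eqxx ?n01 ?n10 /=; ring.
Qed.

Lemma mdet_mul M N : mdet (M * N) = mdet M * mdet N.
Proof. by rewrite /mdet !mulE; ring. Qed.

Lemma inv_of M N : M * N = 1 -> M^-1 = N.
Proof.
move=> h; have [Mu _] := @mulmx1_unit F 2 M N h.
by rewrite -[M^-1]mulr1 -h mulKr.
Qed.

Lemma invE M : mdet M = 1 -> M^-1 = mtr M *: 1 - M.
Proof.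
move=> H; apply: inv_of.
by rewrite mulrBr -scalerAr mulr1 CH // opprB addrC subrK.
Qed.

Lemma mdet_inv M : mdet M = 1 -> mdet (M^-1) = 1.
Proof.
move=> H; rewrite invE // -H /mdet /mtr !mxE ?eqxx ?n01 ?n10 /=; ring.
Qed.

Lemma mtr_inv M : mdet M = 1 -> mtr (M^-1) = mtr M.
Proof.
move=> H; rewrite invE // /mtr !mxE ?eqxx ?n01 ?n10 /=; ring.
Qed.

Lemma mdet_pown M : mdet M = 1 -> forall j, mdet (M ^+ j) = 1.
Proof.
move=> H; elim=> [|j IH]; first by rewrite expr0 /mdet !mxE ?eqxx ?n01 ?n10 /=; ring.
by rewrite exprSr mdet_mul IH H mulr1.
Qed.

Lemma mdet_powz M (k : int) : mdet M = 1 -> mdet (M ^ k) = 1.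
Proof.
move=> H; case: k => j; first exact: mdet_pown.
rewrite /exprz -exprVn; apply: mdet_pown; exact: mdet_inv.
Qed.

Lemma powz M (k : int) : mdet M = 1 ->
  M ^ k = chebS (k - 1) (mtr M) *: M - chebS (k - 2) (mtr M) *: 1.
Proof.
move=> H; case: k => [[|j]|j].
- have -> : (Posz 0 - 1) = Negz 0 by [].
  have -> : (Posz 0 - 2) = Negz 1 by [].
  by rewrite /= expr0z scale0r sub0r /chebS_nat /= scaleN1r opprK.
- rewrite /exprz (pow_nat _ _ (CH M H)).
  have -> : (Posz j.+1 - 1) = Posz j by lia.
  case: j => [|j]; first by have -> : (Posz 1 - 2) = Negz 0 by [].
  by have -> : (Posz j.+2 - 2) = Posz j by lia.
- have -> : (Negz j - 1) = Negz j.+1 by rewrite !NegzE; lia.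
  have -> : (Negz j - 2) = Negz j.+2 by rewrite !NegzE; lia.
  rewrite /exprz -exprVn (pow_nat _ _ (CH _ (mdet_inv _ H))).
  rewrite /chebS mtr_inv // invE // chebS_rec.
  by apply: mx2P; rewrite !mxE ?eqxx ?n01 ?n10 /=; ring.
Qed.

Lemma mx2_00 a b c d : (@mx2 F a b c d) i0 i0 = a. Proof. by rewrite /mx2 !mxE. Qed.
Lemma mx2_01 a b c d : (@mx2 F a b c d) i0 i1 = b. Proof. by rewrite /mx2 !mxE. Qed.
Lemma mx2_10 a b c d : (@mx2 F a b c d) i1 i0 = c. Proof. by rewrite /mx2 !mxE. Qed.
Lemma mx2_11 a b c d : (@mx2 F a b c d) i1 i1 = d. Proof. by rewrite /mx2 !mxE. Qed.
Lemma one00 : (1 : 'M[F]_2) i0 i0 = 1. Proof. by rewrite -[1]/(1%:M) !mxE. Qed.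
Lemma one01 : (1 : 'M[F]_2) i0 i1 = 0. Proof. by rewrite -[1]/(1%:M) !mxE. Qed.
Lemma one10 : (1 : 'M[F]_2) i1 i0 = 0. Proof. by rewrite -[1]/(1%:M) !mxE. Qed.
Lemma one11 : (1 : 'M[F]_2) i1 i1 = 1. Proof. by rewrite -[1]/(1%:M) !mxE. Qed.
Lemma trE M : \tr M = mtr M.
Proof.
rewrite /mxtrace big_ord_recr big_ord1 /= /mtr.
by have -> : widen_ord (leqnSn 1) ord0 = i0 by apply: val_inj.
Qed.
Lemma conv (x y x' y' : F) : x' = y' -> x - y = x' - y' -> x = y.
Proof. by move=> -> /eqP; rewrite subrr subr_eq0 => /eqP. Qed.
End Gen.
Arguments mdet {F}. Arguments mtr {F}. Arguments Sp {F}.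
Arguments conv {F x y x' y'}.
Lemma scE (F : fieldType) (k : F) (M : 'M[F]_2) i j : (k *: M) i j = k * M i j.
Proof. by rewrite mxE. Qed.
Lemma subE (F : fieldType) (M N : 'M[F]_2) i j : (M - N) i j = M i j - N i j.
Proof. by rewrite !mxE. Qed.
Lemma addE (F : fieldType) (M N : 'M[F]_2) i j : (M + N) i j = M i j + N i j.
Proof. by rewrite !mxE. Qed.
Section Mx2.
Variable F : fieldType.
Lemma one_mx2 : (1 : 'M[F]_2) = mx2 1 0 0 1.
Proof. by apply: mx2P; rewrite ?mx2_00 ?mx2_01 ?mx2_10 ?mx2_11 ?one00 ?one01 ?one10 ?one11. Qed.
Lemma mx2_lin (k l a b c d : F) :
  k *: mx2 a b c d - l *: 1 = mx2 (k*a - l) (k*b) (k*c) (k*d - l).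
Proof.
apply: mx2P; rewrite !subE !scE ?mx2_00 ?mx2_01 ?mx2_10 ?mx2_11 ?one00 ?one01 ?one10 ?one11;
  by rewrite ?mulr1 ?mulr0 ?subr0.
Qed.
Lemma mx2_mul (a b c d a' b' c' d' : F) : mx2 a b c d * mx2 a' b' c' d' =
  mx2 (a*a' + b*c') (a*b' + b*d') (c*a' + d*c') (c*b' + d*d').
Proof. by apply: mx2P; rewrite !mulE ?mx2_00 ?mx2_01 ?mx2_10 ?mx2_11. Qed.
Lemma mx2_mdet (a b c d : F) : mdet (mx2 a b c d) = a*d - b*c.
Proof. by rewrite /mdet ?mx2_00 ?mx2_01 ?mx2_10 ?mx2_11. Qed.
Lemma mx2_mtr (a b c d : F) : mtr (mx2 a b c d) = a + d.
Proof. by rewrite /mtr ?mx2_00 ?mx2_01 ?mx2_10 ?mx2_11. Qed.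
End Mx2.
Lemma mdet_prod_pow (F : fieldType) (M N : 'M[F]_2) (k : int) :
  mdet M = 1 -> mdet N = 1 -> mdet (M ^ k * N ^ k) = 1.
Proof. by move=> hM hN; rewrite mdet_mul (mdet_powz _ _ k hM) (mdet_powz _ _ k hN) mulr1. Qed.


Section Fin.
Variable F : fieldType.
Variables (s y p q : F).
Definition cc := 2 - y.
Definition u00 := p - q.
Definition u01 := - (p * s).
Definition u10 := p * cc / s.
Definition u11 := p * (1 - cc) - q.
Definition v00 := p - q.
Definition v01 := p / s.
Definition v10 := - (p * cc * s).
Definition v11 := p * (1 - cc) - q.
Definition w00 := u00 * v00 + u01 * v10.
Definition w01 := u00 * v01 + u01 * v11.
Definition w10 := u10 * v00 + u11 * v10.
Definition w11 := u10 * v01 + u11 * v11.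
Definition ur00 := p * (1 - cc) - q.
Definition ur01 := p * s.
Definition ur10 := - (p * cc / s).
Definition ur11 := p - q.
Definition vr00 := p * (1 - cc) - q.
Definition vr01 := - (p / s).
Definition vr10 := p * cc * s.
Definition vr11 := p - q.
Definition wr00 := ur00 * vr00 + ur01 * vr10.
Definition wr01 := ur00 * vr01 + ur01 * vr11.
Definition wr10 := ur10 * vr00 + ur11 * vr10.
Definition wr11 := ur10 * vr01 + ur11 * vr11.

Lemma trWr : s != 0 -> wr00 + wr11 = w00 + w11.
Proof.
move=> s0; rewrite /wr00 /wr11 /w00 /w11 /ur00 /ur01 /ur10 /ur11 /vr00 /vr01 /vr10 /vr11.
rewrite /u00 /u01 /u10 /u11 /v00 /v01 /v10 /v11; by field.
Qed.

Lemma final a1 a0 : s != 0 -> p ^+ 2 - y * p * q + q ^+ 2 = 1 ->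
  (a1 * w00 - a0) * 1 + a1 * w01 * s^-1 = s * (a1 * w01) ->
  (a1 * w00 - a0) * (a1 * w11 - a0) - (a1 * w01) * (a1 * w10) = 1 ->
  (a1 * wr00 - a0) * (a1 * w00 - a0) + (a1 * wr01) * (a1 * w10)
  + ((a1 * wr10) * (a1 * w01) + (a1 * wr11 - a0) * (a1 * w11 - a0)) =
    2 - ((s + s^-1) ^+ 2 * (y - 2) ^+ 2 * p ^+ 2) /
        (2 - s ^+ 2 - s ^- 2 + (y - s ^+ 2 - s ^- 2) * (y - 2) * p ^+ 2).
Proof.
move=> s0 Rpq Hrel Hdet.
set d := s - s^-1.
set e := w00 - d * w01.
have ha0 : a0 = a1 * e.
  apply: (@cof _ _ _ (-1) ((a1 * w00 - a0) * 1 + a1 * w01 * s^-1 - s * (a1 * w01))).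
    by rewrite Hrel subrr.
  by rewrite /e /d; ring.
set r := p ^+ 2 - y * p * q + q ^+ 2 - 1.
have r0 : r = 0 by rewrite /r Rpq subrr.
set Dn := 2 - s ^+ 2 - s ^- 2 + (y - s ^+ 2 - s ^- 2) * (y - 2) * p ^+ 2.
set N := (s + s^-1) ^+ 2 * (y - 2) ^+ 2 * p ^+ 2.
set G := - p ^+ 2 * (d ^+ 2 + cc).
set K1 := p ^+ 2 * d ^+ 2 * (d ^+ 2 + cc).
have E1 : w00 * w11 - w01 * w10 - (w00 + w11) * e + e ^+ 2 = Dn * G.
  apply: (@cof _ _ _ K1 r r0).
  rewrite /r /K1 /Dn /G /e /d /w00 /w01 /w10 /w11 /u00 /u01 /u10 /u11 /v00 /v01 /v10 /v11 /cc.
  by field.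
have E2 : (wr00 - e) * (w00 - e) + wr01 * w10 + wr10 * w01 + (wr11 - e) * (w11 - e)
    = 2 * Dn * G - N * G.
  apply: (@cof _ _ _ (2 * K1) r r0).
  rewrite /r /K1 /Dn /G /N /e /d /w00 /w01 /w10 /w11 /u00 /u01 /u10 /u11 /v00 /v01 /v10 /v11.
  rewrite /wr00 /wr01 /wr10 /wr11 /ur00 /ur01 /ur10 /ur11 /vr00 /vr01 /vr10 /vr11 /cc.
  by field.
have hdet : a1 ^+ 2 * (Dn * G) = 1.
  rewrite -E1 -Hdet ha0; ring.
have Dn0 : Dn != 0.
  apply/eqP => D0; move: hdet; rewrite D0 mul0r mulr0 => /eqP.
  by rewrite eq_sym oner_eq0.
have X : a1 ^+ 2 * G = Dn^-1.
  apply: (mulfI Dn0); rewrite mulfV // -hdet; ring.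
rewrite ha0.
transitivity ((2 * Dn - N) * (a1 ^+ 2 * G)).
  rewrite -[RHS]/((2 * Dn - N) * (a1 ^+ 2 * G)).
  have -> : (2 * Dn - N) * (a1 ^+ 2 * G) = a1 ^+ 2 * (2 * Dn * G - N * G) by ring.
  rewrite -E2; ring.
by rewrite X; field.
Qed.
End Fin.
Arguments cc {F}.
Arguments u00 {F}.
Arguments u01 {F}.
Arguments u10 {F}.
Arguments u11 {F}.
Arguments v00 {F}.
Arguments v01 {F}.
Arguments v10 {F}.
Arguments v11 {F}.
Arguments w00 {F}.
Arguments w01 {F}.
Arguments w10 {F}.
Arguments w11 {F}.
Arguments ur00 {F}.
Arguments ur01 {F}.
Arguments ur10 {F}.
Arguments ur11 {F}.
Arguments vr00 {F}.
Arguments vr01 {F}.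
Arguments vr10 {F}.
Arguments vr11 {F}.
Arguments wr00 {F}.
Arguments wr01 {F}.
Arguments wr10 {F}.
Arguments wr11 {F}.
Arguments final {F}.
Arguments trWr {F}.



Theorem proposition2p7 (R : realType) (m n : int) (s y : R[i]) :
  m != 0 -> n != 0 -> s != 0 -> y != 2 ->
  rhoW m s y ^ n * rhoA s = rhoB s y * rhoW m s y ^ n ->
  \tr (rhoLambda m n s y) =
    2 - ((s + s^-1) ^+ 2 * (y - 2) ^+ 2 * (chebS (m - 1) y) ^+ 2) /
        (2 - s ^+ 2 - s ^- 2 + (y - s ^+ 2 - s ^- 2) * (y - 2) * (chebS (m - 1) y) ^+ 2).
Proof.
move=> m0 n0 s0 y2 hrel.
have hAi : (rhoA s)^-1 = mx2 s^-1 (-1) 0 s.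
  by apply: inv_of; rewrite /rhoA mx2_mul one_mx2; congr mx2; field.
have hBi : (rhoB s y)^-1 = mx2 s^-1 0 (-(2 - y)) s.
  by apply: inv_of; rewrite /rhoB mx2_mul one_mx2; congr mx2; field.
have hP : rhoB s y * (rhoA s)^-1 = mx2 1 (-s) (cc y / s) (1 - cc y).
  by rewrite hAi /rhoB mx2_mul /cc; congr mx2; field.
have hQ : (rhoB s y)^-1 * rhoA s = mx2 1 (s^-1) (-(cc y * s)) (1 - cc y).
  by rewrite hBi /rhoA mx2_mul /cc; congr mx2; field.
have hPr : rhoA s * (rhoB s y)^-1 = mx2 (1 - cc y) s (-(cc y / s)) 1.
  by rewrite hBi /rhoA mx2_mul /cc; congr mx2; field.
have hQr : (rhoA s)^-1 * rhoB s y = mx2 (1 - cc y) (- s^-1) (cc y * s) 1.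
  by rewrite hAi /rhoB mx2_mul /cc; congr mx2; field.
set p := chebS (m - 1) y; set q := chebS (m - 2) y.
have dP : mdet (mx2 1 (-s) (cc y / s) (1 - cc y)) = 1 by rewrite mx2_mdet /cc; field.
have tP : mtr (mx2 1 (-s) (cc y / s) (1 - cc y)) = y by rewrite mx2_mtr /cc; ring.
have dQ : mdet (mx2 1 (s^-1) (-(cc y * s)) (1 - cc y)) = 1 by rewrite mx2_mdet /cc; field.
have tQ : mtr (mx2 1 (s^-1) (-(cc y * s)) (1 - cc y)) = y by rewrite mx2_mtr /cc; ring.
have dPr : mdet (mx2 (1 - cc y) s (-(cc y / s)) 1) = 1 by rewrite mx2_mdet /cc; field.
have tPr : mtr (mx2 (1 - cc y) s (-(cc y / s)) 1) = y by rewrite mx2_mtr /cc; ring.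
have dQr : mdet (mx2 (1 - cc y) (- s^-1) (cc y * s) 1) = 1 by rewrite mx2_mdet /cc; field.
have tQr : mtr (mx2 (1 - cc y) (- s^-1) (cc y * s) 1) = y by rewrite mx2_mtr /cc; ring.
have Rpq : p ^+ 2 - y * p * q + q ^+ 2 = 1.
  have := mdet_powz _ _ m dP; rewrite (powz _ _ m dP) tP -/p -/q mx2_lin mx2_mdet => E.
  by apply: (conv E); rewrite /cc; field.
have hW : rhoW m s y = mx2 (w00 s y p q) (w01 s y p q) (w10 s y p q) (w11 s y p q).
  rewrite /rhoW hP hQ (powz _ _ m dP) (powz _ _ m dQ) tP tQ -/p -/q !mx2_lin mx2_mul.
  by congr mx2; rewrite /w00 /w01 /w10 /w11 /u00 /u01 /u10 /u11 /v00 /v01 /v10 /v11; ring.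
have hWr : rhoWrev m s y = mx2 (wr00 s y p q) (wr01 s y p q) (wr10 s y p q) (wr11 s y p q).
  rewrite /rhoWrev hPr hQr (powz _ _ m dPr) (powz _ _ m dQr) tPr tQr -/p -/q !mx2_lin mx2_mul.
  by congr mx2; rewrite /wr00 /wr01 /wr10 /wr11 /ur00 /ur01 /ur10 /ur11 /vr00 /vr01 /vr10 /vr11; ring.
have dW : mdet (rhoW m s y) = 1.
  by rewrite /rhoW hP hQ; apply: mdet_prod_pow.
have dWr : mdet (rhoWrev m s y) = 1.
  by rewrite /rhoWrev hPr hQr; apply: mdet_prod_pow.
have tWr : mtr (rhoWrev m s y) = mtr (rhoW m s y).
  by rewrite hW hWr !mx2_mtr; apply: trWr.
pose a1 := chebS (n - 1) (mtr (rhoW m s y)).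
pose a0 := chebS (n - 2) (mtr (rhoW m s y)).
have hWn : rhoW m s y ^ n = a1 *: rhoW m s y - a0 *: 1 by rewrite (powz _ _ n dW); reflexivity.
have hWrn : rhoWrev m s y ^ n = a1 *: rhoWrev m s y - a0 *: 1 by rewrite (powz _ _ n dWr) tWr; reflexivity.
have H1 : (a1 * w00 s y p q - a0) * 1 + a1 * w01 s y p q * s^-1 = s * (a1 * w01 s y p q).
  move: hrel; rewrite hWn hW mx2_lin /rhoA /rhoB !mx2_mul.
  move/(congr1 (fun M : 'M[R[i]]_2 => M i0 i1)); rewrite !mx2_01 => E.
  by apply: (conv E); ring.
have H2 : (a1 * w00 s y p q - a0) * (a1 * w11 s y p q - a0)
    - (a1 * w01 s y p q) * (a1 * w10 s y p q) = 1.
  rewrite -(mdet_powz _ _ n dW) hWn hW mx2_lin mx2_mdet; reflexivity.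
clearbody a1 a0.
rewrite /rhoLambda; move: (rhoWrev m s y) (rhoW m s y) hWrn hWn hW hWr.
move=> Wr W -> -> -> ->.
rewrite !mx2_lin mx2_mul trE mx2_mtr.
rewrite -[in RHS](final s y p q a1 a0 s0 Rpq H1 H2).
ring.
Qed.
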